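(* Let $\hat W_k,\hat W_{k+1}\in B(\mathcal X;1)$ be fixed, $\eta$ a probability distribution on $A\setminus K$, $\tilde M\ge1$. Let $x\sim\eta$ and, conditionally on $x$, for each $a\in\mathcal A$ let $y_1^{a,1},\dots,y_1^{a,\tilde M}$ and $y_2^{a,1},\dots,y_2^{a,\tilde M}$ be mutually independent i.i.d. draws from $T(\cdot\mid x,a)$. For $\alpha=1,2$ define $\hat{\mathsf T}^a_\alpha\hat W_{k+1}(x)=\frac1{\tilde M}\sum_{j=1}^{\tilde M}[\mathbf 1_K(y_\alpha^{a,j})+\mathbf 1_{A\setminus K}(y_\alpha^{a,j})\hat W_{k+1}(y_\alpha^{a,j})]$. Then $$\|\hat W_k-\mathsf T\hat W_{k+1}\|_{1,\eta}\le\mathbf E\Big[\big|\hat W_k(x)-\max_{a\in\mathcal A}\hat{\mathsf T}^a_1\hat W_{k+1}(x)\big|\Big]+\mathbf E\Big[\max_{a\in\mathcal A}\big|\hat{\mathsf T}^a_1\hat W_{k+1}(x)-\hat{\mathsf T}^a_2\hat W_{k+1}(x)\big|\Big].$$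
   Context: Controlled Markov process on $\mathcal X\subset\mathbb R^n$, finite action set $\mathcal A$, kernel $T(\cdot\mid x,a)$; Borel safe set $A$ and target set $K$. $B(\mathcal X;1)$: measurable functions $\mathcal X\to[0,1]$. $(\mathsf TW)(x)=\max_{a}\mathbf E[\mathbf 1_K(y)+\mathbf 1_{A\setminus K}(y)W(y)]$, $y\sim T(\cdot\mid x,a)$. $\|f\|_{1,\eta}=\int_{A\setminus K}|f|\,d\eta$. *)

(* Defs.v *)
From HB Require Import structures.
From mathcomp Require Import all_boot all_order all_algebra.
From mathcomp Require Import all_classical all_reals all_analysis.
Set Implicit Arguments. Unset Strict Implicit. Unset Printing Implicit Defensive.
Import Order.TTheory GRing.Theory Num.Theory.
Local Open Scope classical_set_scope.
Local Open Scope ring_scope.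

Section Defs.
Context (R : realType) (dX : measure_display) (X : measurableType dX)
  (Act : finType).

Definition inB1 (W : X -> R) : Prop :=
  measurable_fun setT W /\ (forall x, 0 <= W x <= 1).

Definition stepfun (SA SK : set X) (W : X -> R) (y : X) : R :=
  \1_SK y + \1_(SA `\` SK) y * W y.

Definition Top (T : Act -> R.-pker X ~> X) (SA SK : set X) (W : X -> R)
  (x : X) : \bar R :=
  \big[maxe/-oo%E]_(a : Act) (\int[T a x]_y (stepfun SA SK W y)%:E)%E.

Definition norm1 (eta : probability X R) (SA SK : set X) (f : X -> \bar R)
  : \bar R := (\int[eta]_(x in SA `\` SK) `|f x|)%E.

Definition That (M : nat) (SA SK : set X) (W : X -> R) (ys : 'I_M -> X) : R :=
  M%:R^-1 * \sum_(j < M) stepfun SA SK W (ys j).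

(* Joint law of (x, (y_alpha^{a,j})): x ~ eta, and conditionally on x the
   y_alpha^{a,j} are mutually independent with law T(.|x,a).  Stated on
   measurable rectangles (which determine the joint law). *)
Definition sampling_law (dO : measure_display) (Omega : measurableType dO)
  (P : probability Omega R) (T : Act -> R.-pker X ~> X)
  (eta : probability X R) (M : nat) (x : Omega -> X)
  (y : 'I_2 -> Act -> 'I_M -> Omega -> X) : Prop :=
  forall (B : set X) (C : 'I_2 -> Act -> 'I_M -> set X),
    measurable B -> (forall i a j, measurable (C i a j)) ->
    P [set w | B (x w) /\ forall i a j, C i a j (y i a j w)] =
    (\int[eta]_(z in B)
       (\prod_(i < 2) \prod_(a : Act) \prod_(j < M) fine (T a z (C i a j)))%:E)%E.

End Defs.

(* Main.v *)
Require Import Defs.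
From HB Require Import structures.
From mathcomp Require Import all_boot all_order all_algebra.
From mathcomp Require Import all_classical all_reals all_analysis.
From mathcomp Require Import measurable_realfun.
From mathcomp Require Import lra.
Import Order.TTheory GRing.Theory Num.Theory.
Local Open Scope classical_set_scope.
Local Open Scope ring_scope.
Import HBNNSimple.

Section mix.
Local Open Scope ereal_scope.
Context (R : realType) d d' (Z : measurableType d) (Y : measurableType d').

Lemma int_nnsfun (m : {measure set Y -> \bar R}) (f : {nnsfun Y >-> R}) :
  \int[m]_y (f y)%:E = \sum_(r \in range f) r%:E * m (f @^-1` [set r]).
Proof.
under eq_integral do rewrite fimfunE -fsumEFin//.
rewrite ge0_integral_fsum//; last 2 first.
  - by move=> r; exact/measurable_EFinP/measurable_funM.
  - by move=> r z _; rewrite nnfun_muleindic_ge0.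
apply: eq_fsbigr => r _.
rewrite (integralZl_indic _ (fun r => f @^-1` [set r]))//; last first.
  by move=> r0; rewrite preimage_nnfun0.
by rewrite integral_indic// setIT.
Qed.

Variables (mu : {measure set Z -> \bar R}) (h : Z -> R) (k : Z -> {measure set Y -> \bar R}).
Hypothesis h0 : forall z, (0 <= h z)%R.
Hypothesis mh : measurable_fun setT h.
Hypothesis mk : forall U, measurable U -> measurable_fun setT (k ^~ U).

Definition psi (g : Y -> \bar R) := \int[mu]_z ((h z)%:E * \int[k z]_y g y).

Lemma term_ge0 (m : {measure set Y -> \bar R}) (f : {nnsfun Y >-> R}) r :
  0 <= r%:E * m (f @^-1` [set r]).
Proof.
have [r0|r0] := leP 0%R r; first by rewrite mule_ge0// lee_fin.
by rewrite preimage_nnfun0// measure0 mule0.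
Qed.

Lemma psi_nnsfun (f : {nnsfun Y >-> R}) :
  psi (EFin \o f) = \sum_(r \in range f) r%:E * \int[mu]_z ((h z)%:E * k z (f @^-1` [set r])).
Proof.
rewrite /psi.
under eq_integral => z _.
  rewrite int_nnsfun ge0_mule_fsumr; last by move=> r; exact: term_ge0.
  over.
rewrite /= ge0_integral_fsum//; last 2 first.
  - move=> r; apply: emeasurable_funM; first exact/measurable_EFinP.
    apply: emeasurable_funM; first exact: measurable_cst.
    by apply: mk.
  - by move=> r z _; rewrite mule_ge0 ?lee_fin// term_ge0.
apply: eq_fsbigr => r _.
have [r0|r0] := leP 0%R r.
  under eq_integral do rewrite muleCA.
  rewrite ge0_integralZl//.
  - apply: emeasurable_funM; first exact/measurable_EFinP.
    by apply: mk.
  - by move=> z _; rewrite mule_ge0// lee_fin.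
rewrite preimage_nnfun0//.
rewrite integral0_eq; last by move=> z _; rewrite measure0 !mule0.
rewrite integral0_eq ?mule0//.
by move=> z _; rewrite measure0 mule0.
Qed.

Lemma psi_lim (g : Y -> R) (g0 : forall y, (0 <= g y)%R)
  (mf : measurable_fun setT (EFin \o g)) :
  psi (EFin \o g) = limn (fun n => psi (EFin \o nnsfun_approx measurableT mf n)).
Proof.
set fA := nnsfun_approx measurableT mf.
have nd y : {homo (fun n => ((fA n y)%:E)) : n m / (n <= m)%N >-> n <= m}.
  by move=> a b ab; rewrite lee_fin; exact/lefP/nd_nnsfun_approx.
have inner z : \int[k z]_y (g y)%:E = limn (fun n => \int[k z]_y (fA n y)%:E).
  transitivity (\int[k z]_y limn (fun n => (fA n y)%:E)).
    apply: eq_integral => y _; apply/esym/cvg_lim => //.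
    by apply: (cvg_nnsfun_approx measurableT mf) => // x _; rewrite lee_fin.
  apply: monotone_convergence => //.
  - by move=> n; apply/measurable_EFinP; exact: measurable_funP.
  - by move=> n y _; rewrite lee_fin.
have ndI z : {homo (fun n => \int[k z]_y (fA n y)%:E) : n m / (n <= m)%N >-> n <= m}.
  move=> a b ab; apply: ge0_le_integral => //.
  - by move=> y _; rewrite lee_fin.
  - exact/measurable_EFinP.
  - exact/measurable_EFinP.
  - by move=> y _; exact: nd.
rewrite /psi.
transitivity (\int[mu]_z limn (fun n => (h z)%:E * \int[k z]_y (fA n y)%:E)).
  apply: eq_integral => z _; rewrite inner limeMl//.
  exact: ereal_nondecreasing_is_cvgn.
apply: monotone_convergence => //.
- move=> n; apply: emeasurable_funM; first exact/measurable_EFinP.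
  apply: measurable_fun_integral_kernel => //.
  + by move=> y; rewrite lee_fin.
  + exact/measurable_EFinP.
- by move=> n z _; rewrite mule_ge0 ?lee_fin// integral_ge0// => y _; rewrite lee_fin.
- by move=> z _ a b ab; rewrite lee_wpmul2l ?lee_fin//; exact: ndI.
Qed.

End mix.

Section mix2.
Local Open Scope ereal_scope.
Context (R : realType) d1 d2 d' (Z1 : measurableType d1) (Z2 : measurableType d2)
  (Y : measurableType d').
Variables (mu1 : {measure set Z1 -> \bar R}) (h1 : Z1 -> R)
  (k1 : Z1 -> {measure set Y -> \bar R}).
Variables (mu2 : {measure set Z2 -> \bar R}) (h2 : Z2 -> R)
  (k2 : Z2 -> {measure set Y -> \bar R}).
Hypothesis h10 : forall z, (0 <= h1 z)%R.
Hypothesis mh1 : measurable_fun setT h1.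
Hypothesis mk1 : forall U, measurable U -> measurable_fun setT (k1 ^~ U).
Hypothesis h20 : forall z, (0 <= h2 z)%R.
Hypothesis mh2 : measurable_fun setT h2.
Hypothesis mk2 : forall U, measurable U -> measurable_fun setT (k2 ^~ U).
Hypothesis eqC : forall C, measurable C ->
  \int[mu1]_z ((h1 z)%:E * k1 z C) = \int[mu2]_z ((h2 z)%:E * k2 z C).

Lemma mix (g : Y -> R) : (forall y, (0 <= g y)%R) -> measurable_fun setT g ->
  \int[mu1]_z ((h1 z)%:E * \int[k1 z]_y (g y)%:E) =
  \int[mu2]_z ((h2 z)%:E * \int[k2 z]_y (g y)%:E).
Proof.
move=> g0 mg.
have mf : measurable_fun setT (EFin \o g) by exact/measurable_EFinP.
have := @psi_lim _ _ _ _ _ mu1 h1 k1 h10 mh1 mk1 g g0 mf.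
have := @psi_lim _ _ _ _ _ mu2 h2 k2 h20 mh2 mk2 g g0 mf.
rewrite /psi /= => -> ->; congr (limn _); apply/funext => n.
have := @psi_nnsfun _ _ _ _ _ mu1 h1 k1 h10 mh1 mk1.
have := @psi_nnsfun _ _ _ _ _ mu2 h2 k2 h20 mh2 mk2.
rewrite /psi => -> ->.
by apply: eq_fsbigr => r _; rewrite eqC//.

Qed.
End mix2.

Lemma ord2_cases (i : 'I_2) : i = ord0 \/ i = lift ord0 ord0.
Proof.
case: i => [[|[|m]] Hi]; [left|right|by []]; exact: val_inj.
Qed.

Lemma mbigmax (R : realType) d0 (T' : measurableType d0) (I : Type) (s : seq I)
  (F : I -> T' -> R) : (forall i, measurable_fun setT (F i)) ->
  measurable_fun setT (fun w => \big[Num.max/0%R]_(i <- s) F i w).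
Proof.
move=> mF; elim: s => [|i s IH].
  by under eq_fun do rewrite big_nil; exact: measurable_cst.
under eq_fun do rewrite big_cons.
exact: (measurable_maxr (mF i) IH).
Qed.

Section farg.
Context (R : realType) (I : finType).

Definition farg (f : I -> R) (a : I) : Prop :=
  (forall b, f b <= f a) /\ (forall b, (enum_rank b < enum_rank a)%N -> f b < f a).

Lemma farg_uniq f a b : farg f a -> farg f b -> a = b.
Proof.
move=> [Ha1 Ha2] [Hb1 Hb2]; apply: enum_rank_inj.
case: (ltngtP (enum_rank a) (enum_rank b)) => [ab|ba|/val_inj //].
  by have := Hb2 a ab; rewrite ltNge Ha1.
by have := Ha2 b ba; rewrite ltNge Hb1.
Qed.

Lemma farg_ex f (i0 : I) : exists a, farg f a.
Proof.
have [a0 _ Hmax] : extremum_spec (>=%O) xpredT f [arg max_(i > i0) f i]%O.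
  exact: arg_maxP.
have {}Hmax : forall c, f c <= f a0 by move=> c; exact: Hmax.
have [b Hb Hmin] : extremum_spec leq (fun c => f c == f a0) (fun c => enum_rank c)
    [arg min_(c < a0 | f c == f a0) enum_rank c].
  by apply: arg_minnP.
exists b; split.
  by move=> c; rewrite (eqP Hb); exact: Hmax.
move=> c lt; rewrite (eqP Hb) lt_neqAle Hmax // andbT.
apply/negP => /eqP e; have := Hmin c (introT eqP e).
by rewrite leqNgt lt.
Qed.

Lemma bigmax_farg (f : I -> R) a : (forall b, 0 <= f b) -> (forall b, f b <= f a) ->
  \big[Num.max/0]_b f b = f a.
Proof.
move=> f0 fa; apply/eqP; rewrite eq_le le_bigmax andbT.
by apply: bigmax_le => // b _.
Qed.

Lemma bigmaxe_EFin (f : I -> R) (i0 : I) : (forall b, 0 <= f b) ->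
  (\big[maxe/-oo]_b (f b)%:E = (\big[Num.max/0]_b f b)%:E)%E.
Proof.
move=> f0; have [a [fa _]] := farg_ex f i0.
rewrite (bigmax_farg f a f0 fa); apply/eqP; rewrite eq_le.
rewrite (le_bigmax _ (fun b => (f b)%:E) a) andbT.
by apply: bigmax_le => [|b _]; [exact: leNye|rewrite lee_fin].
Qed.

Lemma le_bigmax_gen (f : I -> R) b : f b <= \big[Num.max/0]_a f a.
Proof. exact: le_bigmax. Qed.

End farg.
Arguments farg {R I}.
Arguments farg_uniq {R I f a b}.
Arguments farg_ex {R I}.
Arguments bigmax_farg {R I}.
Arguments bigmaxe_EFin {R I}.
Arguments le_bigmax_gen {R I}.

Section main.
Local Open Scope ereal_scope.
Context (R : realType) (dX : measure_display) (X : measurableType dX)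
  (Act : finType) (T : Act -> R.-pker X ~> X) (SA SK : set X)
  (Wk Wk1 : X -> R) (eta : probability X R) (M : nat)
  (dO : measure_display) (Omega : measurableType dO) (P : probability Omega R)
  (x : Omega -> X) (y : 'I_2 -> Act -> 'I_M -> Omega -> X).
Hypotheses (hAct : (0 < #|Act|)%N) (mSA : measurable SA) (mSK : measurable SK)
  (hWk : inB1 Wk) (hWk1 : inB1 Wk1) (heta : eta (~` (SA `\` SK)) = 0%E)
  (hM : (1 <= M)%N) (mx : measurable_fun setT x)
  (my : forall i a j, measurable_fun setT (y i a j))
  (hlaw : sampling_law P T eta x y).

Definition y1 a j := y ord0 a j.
Definition y2 a j := y (lift ord0 ord0) a j.

Definition rect (B : set X) (Cs : Act -> 'I_M -> set X) : set Omega :=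
  [set w | B (x w) /\ forall a j, Cs a j (y1 a j w)].

Definition Hc (Cs : Act -> 'I_M -> set X) (z : X) : R :=
  (\prod_(a : Act) \prod_(j < M) fine (T a z (Cs a j)))%R.

Lemma fineT a z : fine (T a z setT) = 1%R.
Proof. by rewrite prob_kernel. Qed.

Lemma law_rect2 B Cs a j C : measurable B -> (forall a j, measurable (Cs a j)) ->
  measurable C ->
  P (rect B Cs `&` y2 a j @^-1` C) =
  \int[eta]_(z in B) (Hc Cs z * fine (T a z C))%:E.
Proof.
move=> mB mCs mC.
pose C' (i : 'I_2) a' j' := if i == ord0 then Cs a' j'
  else if (a' == a) && (j' == j) then C else setT.
have mC' : forall i a j, measurable (C' i a j).
  by move=> i a' j'; rewrite /C'; case: ifP => // _; case: ifP.
have := hlaw B C' mB mC'.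
have -> : [set w | B (x w) /\ (forall i a j, C' i a j (y i a j w))] =
    rect B Cs `&` y2 a j @^-1` C.
  apply/seteqP; split => w /=.
    move=> [Bw Hw]; split; first split => //.
    - by move=> a' j'; have := Hw ord0 a' j'; rewrite /C' eqxx.
    - by have := Hw (lift ord0 ord0) a j; rewrite /C' /= !eqxx.
  move=> [[Bw Hw] Cw]; split => // i a' j'.
  case: (ord2_cases i) => ->; rewrite /C' /=; first exact: Hw.
  by case: ifP => // /andP[/eqP -> /eqP ->].
move=> ->; apply: eq_integral => z _; congr EFin.
rewrite big_ord_recl big_ord1 /Hc /C' /=; congr (_ * _)%R.
rewrite (bigD1 a) //= (bigD1 j) //= !eqxx /=.
rewrite big1 ?mulr1; last first.
  by move=> j' /negbTE Hj; rewrite Hj /= ?andbF fineT.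
rewrite big1 ?mulr1 //.
move=> a' /negbTE ->; rewrite big1 // => j' _; exact: fineT.
Qed.

Lemma law_rect B Cs : measurable B -> (forall a j, measurable (Cs a j)) ->
  P (rect B Cs) = \int[eta]_(z in B) (Hc Cs z)%:E.
Proof.
move=> mB mCs.
have [a _] : exists a : Act, true.
  by have /card_gt0P [a _] := hAct; exists a.
have [j _] : exists j : 'I_M, true by exists (Ordinal hM).
have := law_rect2 B Cs a j setT mB mCs measurableT.
rewrite preimage_setT setIT => ->; apply: eq_integral => z _.
by rewrite fineT mulr1.
Qed.

Lemma rect_meas B Cs : measurable B -> (forall a j, measurable (Cs a j)) ->
  measurable (rect B Cs).
Proof.
move=> mB mCs.
have -> : rect B Cs = x @^-1` B `&`
    \bigcap_(k in [set: (Act * 'I_M)%type]) (y1 k.1 k.2 @^-1` Cs k.1 k.2).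
  apply/seteqP; split => w /=.
    by move=> [Bw Hw]; split => // -[a j] _; exact: Hw.
  by move=> [Bw Hw]; split => // a j; exact: (Hw (a, j)).
apply: measurableI.
  by rewrite -[X in measurable X]setTI; exact: mx.
apply: fin_bigcap_measurable; first exact: finite_finset.
move=> [a j] _; rewrite -[X in measurable X]setTI; exact: my.
Qed.

Definition G : set (set Omega) := [set E | exists B Cs, measurable B /\
  (forall a j, measurable (Cs a j)) /\ E = rect B Cs].

Lemma G_meas : G `<=` measurable.
Proof. by move=> E [B [Cs [mB [mCs ->]]]]; exact: rect_meas. Qed.

Lemma sub_S E : <<s G >> E -> measurable E.
Proof. exact: (smallest_sub (sigma_algebra_measurable _) G_meas). Qed.

Lemma G_setI : setI_closed G.
Proof.
move=> E F [B [Cs [mB [mCs ->]]]] [B' [Cs' [mB' [mCs' ->]]]].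
exists (B `&` B'), (fun a j => Cs a j `&` Cs' a j); split.
  exact: measurableI.
split; first by move=> a j; exact: measurableI.
apply/seteqP; split => w /=.
  move=> [[Bw Hw] [Bw' Hw']]; split; first by split.
  by move=> a j; split; [exact: Hw|exact: Hw'].
move=> [[Bw Bw'] H]; split; split => // a j; by have [] := H a j.
Qed.

Lemma rectT : rect setT (fun _ _ => setT) = setT.
Proof. by apply/seteqP; split. Qed.

Lemma eta_law B : measurable B -> eta B = P (x @^-1` B).
Proof.
move=> mB.
have -> : x @^-1` B = rect B (fun _ _ => setT) by apply/seteqP; split => w /=; [move=> Bw; split|case].
rewrite law_rect//.
have H1 z : Hc (fun _ _ => setT) z = 1%R.
  rewrite /Hc big1 // => a _; rewrite big1 // => j _; exact: fineT.
under eq_integral do rewrite H1.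
by rewrite integral_cst// mul1e.
Qed.

Definition sf := stepfun SA SK Wk1.

Lemma sf_ge0 z : (0 <= sf z)%R.
Proof.
rewrite /sf /stepfun; apply: addr_ge0 => //; apply: mulr_ge0 => //.
by case: hWk1 => _ /(_ z) /andP[].
Qed.

Lemma sf_le1 z : (sf z <= 1)%R.
Proof.
rewrite /sf /stepfun !indicE in_setD.
have [/andP[W0 W1]] := (snd hWk1 z).
case: (boolP (z \in SK)) => /= zK.
  by rewrite andbF mul0r addr0.
rewrite add0r andbT; case: (z \in SA) => /=; last by rewrite mul0r.
by rewrite mul1r.
Qed.

Lemma msf : measurable_fun setT sf.
Proof.
rewrite /sf /stepfun; apply: measurable_funD; first exact: measurable_indic.
apply: measurable_funM; first by apply: measurable_indic; exact: measurableD.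
by case: hWk1.
Qed.

Definition qv a z := fine (\int[T a z]_w (sf w)%:E).

Lemma qE a z : \int[T a z]_w (sf w)%:E = (qv a z)%:E.
Proof.
rewrite /qv fineK//; apply/fin_numPlt/andP; split.
  apply: (@lt_le_trans _ _ 0); first exact: ltNyr.
  by apply: integral_ge0 => w _; rewrite lee_fin sf_ge0.
apply: (@le_lt_trans _ _ (\int[T a z]_w (cst 1%:E) w)).
  apply: ge0_le_integral => //.
  - by move=> w _; rewrite lee_fin sf_ge0.
  - exact/measurable_EFinP/msf.
  - by move=> w _; rewrite lee_fin sf_le1.
by rewrite integral_cst// mul1e prob_kernel ltry.
Qed.

Lemma qv_ge0 a z : (0 <= qv a z)%R.
Proof.
by rewrite -lee_fin -qE; apply: integral_ge0 => w _; rewrite lee_fin sf_ge0.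
Qed.

Lemma qv_le1 a z : (qv a z <= 1)%R.
Proof.
rewrite -lee_fin -qE.
apply: (@le_trans _ _ (\int[T a z]_w (cst 1%:E) w)).
  apply: ge0_le_integral => //.
  - by move=> w _; rewrite lee_fin sf_ge0.
  - exact/measurable_EFinP/msf.
  - by move=> w _; rewrite lee_fin sf_le1.
by rewrite integral_cst// mul1e prob_kernel.
Qed.

Lemma mqv a : measurable_fun setT (qv a).
Proof.
have h : measurable_fun setT (fun z => \int[T a z]_w (sf w)%:E).
  apply: measurable_fun_integral_kernel.
  - by move=> U mU; exact: measurable_kernel.
  - by move=> w; rewrite lee_fin sf_ge0.
  - exact/measurable_EFinP/msf.
by apply: measurableT_comp h; exact: fine_measurable.
Qed.

Lemma indic_pre (Z W : Type) (f : Z -> W) (C : set W) w :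
  \1_C (f w) = \1_(f @^-1` C) w :> R.
Proof. by []. Qed.

Lemma conv (D : set Omega) (f : Omega -> \bar R) :
  \int[P]_(w in D) f w = \int[P]_w ((\1_D w)%:E * f w).
Proof.
rewrite integral_mkcond epatch_indic; apply: eq_integral => w _.
by rewrite /= muleC.
Qed.

Lemma dirac_int d' (Y : measurableType d') (v : Y) (g : Y -> R) :
  measurable_fun setT g -> \int[\d_v]_w (g w)%:E = (g v)%:E.
Proof.
move=> mg; rewrite integral_dirac//; last exact/measurable_EFinP.
by rewrite diracT mul1e.
Qed.

Lemma Tfin a z C : measurable C -> T a z C = (fine (T a z C))%:E.
Proof.
move=> mC; rewrite fineK//; apply/fin_numPlt/andP; split.
  by apply: (@lt_le_trans _ _ 0); [exact: ltNyr|exact: measure_ge0].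
apply: (@le_lt_trans _ _ (T a z setT)); last by rewrite prob_kernel ltry.
by apply: le_measure => //; rewrite inE.
Qed.

Lemma Hc_ge0 Cs z : (0 <= Hc Cs z)%R.
Proof.
by apply: prodr_ge0 => a _; apply: prodr_ge0 => j _; apply: fine_ge0; exact: measure_ge0.
Qed.

Lemma mHc Cs : (forall a j, measurable (Cs a j)) -> measurable_fun setT (Hc Cs).
Proof.
move=> mCs; rewrite /Hc; apply: measurable_prod => a _.
apply: measurable_prod => j _.
apply: measurableT_comp (measurable_kernel (T a) _ (mCs a j)).
exact: fine_measurable.
Qed.

Definition dk (f : Omega -> X) : Omega -> {measure set X -> \bar R} :=
  fun w => (@dirac _ X (f w) R : {measure set X -> \bar R}).

Lemma mdk (f : Omega -> X) : measurable_fun setT f ->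
  forall U, measurable U -> measurable_fun setT (dk f ^~ U).
Proof.
move=> mf U mU.
have h := @measurable_fun_dirac _ X R setT U mU.
exact: (measurableT_comp h mf).
Qed.

Lemma KL_rect a j B Cs : measurable B -> (forall a j, measurable (Cs a j)) ->
  \int[P]_(w in rect B Cs) (sf (y2 a j w))%:E =
  \int[P]_(w in rect B Cs) (qv a (x w))%:E.
Proof.
move=> mB mCs.
have mR := rect_meas B Cs mB mCs.
have mRT := rect_meas setT Cs measurableT mCs.
transitivity (\int[eta]_z ((\1_B z * Hc Cs z)%:E * (qv a z)%:E)).
  rewrite conv.
  transitivity (\int[P]_w ((\1_(rect B Cs) w)%:E * \int[dk (y2 a j) w]_v (sf v)%:E)).
    by apply: eq_integral => w _; rewrite dirac_int//; exact: msf.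
  transitivity (\int[eta]_z ((\1_B z * Hc Cs z)%:E * \int[T a z]_v (sf v)%:E)); last first.
    by apply: eq_integral => z _; rewrite qE.
  apply: (@mix _ _ _ _ _ _ _ P (fun w => \1_(rect B Cs) w) (dk (y2 a j)) eta
    (fun z => \1_B z * Hc Cs z)%R (fun z => T a z)).
  - by move=> w; rewrite indicE.
  - exact: measurable_indic.
  - by apply: mdk; exact: my.
  - by move=> z; rewrite mulr_ge0 ?Hc_ge0// indicE.
  - by apply: measurable_funM; [exact: measurable_indic|exact: mHc].
  - by move=> U mU; exact: measurable_kernel.
  - move=> C mC.
    transitivity (P (rect B Cs `&` y2 a j @^-1` C)).
      rewrite -[in RHS](setIT (_ `&` _)) -integral_indic//; last first.
        by apply: measurableI => //; rewrite -[X in measurable X]setTI; exact: my.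
      apply: eq_integral => w _.
      by rewrite /dk /= /dirac -EFinM indicI.
    rewrite (law_rect2 B Cs a j C mB mCs mC) [LHS]integral_mkcond epatch_indic.
    apply: eq_integral => z _ /=.
    by rewrite [in RHS]Tfin// -!EFinM mulrC mulrA.
  - exact: sf_ge0.
  - exact: msf.
transitivity (\int[eta]_z ((Hc Cs z)%:E * (\1_B z * qv a z)%:E)); first last.
  rewrite conv.
  transitivity (\int[P]_w ((\1_(rect setT Cs) w)%:E *
      \int[dk x w]_v ((\1_B v * qv a v)%:E))); last first.
    apply: eq_integral => w _; rewrite dirac_int//; last first.
      by apply: measurable_funM; [exact: measurable_indic|exact: mqv].
    rewrite -!EFinM mulrA.
    have -> : rect B Cs = rect setT Cs `&` x @^-1` B.
      by apply/seteqP; split => v /=; [move=> [Bv Hv]; split|move=> [[_ Hv] Bv]; split].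
    by rewrite indicI.
  apply/esym.
  transitivity (\int[eta]_z ((Hc Cs z)%:E * \int[dirac z]_v ((\1_B v * qv a v)%:E))); last first.
    apply: eq_integral => z _; rewrite dirac_int//.
    by apply: measurable_funM; [exact: measurable_indic|exact: mqv].
  apply: (@mix _ _ _ _ _ _ _ P (fun w => \1_(rect setT Cs) w) (dk x) eta
    (Hc Cs) (fun z => (@dirac _ X z R : {measure set X -> \bar R}))).
  - by move=> w; rewrite indicE.
  - exact: measurable_indic.
  - exact: mdk.
  - exact: Hc_ge0.
  - exact: mHc.
  - by move=> U mU; exact: measurable_fun_dirac.
  - move=> C mC.
    transitivity (P (rect C Cs)).
      rewrite -[in RHS](setIT (rect C Cs)) -integral_indic//; last exact: rect_meas.
      apply: eq_integral => w _.
      rewrite /dk /= /dirac -EFinM.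
      have -> : rect C Cs = rect setT Cs `&` x @^-1` C.
        by apply/seteqP; split => v /=; [move=> [Bv Hv]; split|move=> [[_ Hv] Bv]; split].
      by rewrite indicI.
    rewrite (law_rect C Cs mC mCs) [LHS]integral_mkcond epatch_indic.
    apply: eq_integral => z _ /=.
    by rewrite /= /dirac -EFinM mulrC.
  - by move=> v; rewrite mulr_ge0 ?qv_ge0// indicE.
  - by apply: measurable_funM; [exact: measurable_indic|exact: mqv].
apply: eq_integral => z _; rewrite -!EFinM; congr EFin.
by rewrite mulrCA -mulrA.
Qed.

Lemma fin_int (f : Omega -> R) E : measurable E -> measurable_fun setT f ->
  (forall w, 0 <= f w <= 1)%R -> \int[P]_(w in E) (f w)%:E \is a fin_num.
Proof.
move=> mE mf f01; apply/fin_numPlt/andP; split.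
  apply: (@lt_le_trans _ _ 0); first exact: ltNyr.
  by apply: integral_ge0 => w _; rewrite lee_fin; case/andP: (f01 w).
apply: (@le_lt_trans _ _ (\int[P]_(w in E) (cst 1%:E) w)).
  apply: ge0_le_integral => //.
  - by move=> w _; rewrite lee_fin; case/andP: (f01 w).
  - by apply/measurable_EFinP; exact: measurable_funTS.
  - by move=> w _; rewrite lee_fin; case/andP: (f01 w).
rewrite integral_cst// mul1e; apply: (@le_lt_trans _ _ 1) => //.
  exact: probability_le1.
exact: ltry.
Qed.

Lemma msf2 a j : measurable_fun setT (fun w => sf (y2 a j w)).
Proof. exact: (measurableT_comp msf (my _ _ _)). Qed.

Lemma mqx a : measurable_fun setT (fun w => qv a (x w)).
Proof. exact: (measurableT_comp (mqv a) mx). Qed.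

Lemma KL_set a j E : <<s G >> E ->
  \int[P]_(w in E) (sf (y2 a j w))%:E = \int[P]_(w in E) (qv a (x w))%:E.
Proof.
pose Tp := g_sigma_algebraType G.
pose Pr := fun E : set Tp => measurable (E : set Omega) /\
  \int[P]_(w in E) (sf (y2 a j w))%:E = \int[P]_(w in E) (qv a (x w))%:E.
suff : forall S : set Tp, <<s G >> S -> Pr S by move=> H /H [].
apply: (@dynkin_induction _ Tp G Pr).
- by [].
- exact: G_setI.
- split => //; rewrite -rectT; apply: KL_rect => //.
- move=> E' [B [Cs [mB [mCs ->]]]]; split; first exact: rect_meas.
  exact: KL_rect.
- move=> S mS [mS' HS]; split; first exact: (measurableC mS').
  have hU (f : Omega -> R) : measurable_fun setT f -> (forall w, 0 <= f w)%R ->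
      \int[P]_(w in S) (f w)%:E + \int[P]_(w in ~` S) (f w)%:E =
      \int[P]_w (f w)%:E.
    move=> mf f0; rewrite -ge0_integral_setU//.
    - by rewrite setUCr.
    - exact: (measurableC mS').
    - by apply/measurable_EFinP; exact: measurable_funTS.
    - by move=> w _; rewrite lee_fin.
    - by rewrite disj_set2E setICr.
  have hT : \int[P]_w (sf (y2 a j w))%:E = \int[P]_w (qv a (x w))%:E.
    by rewrite -rectT; apply: KL_rect.
  have fS : \int[P]_(w in S) (qv a (x w))%:E \is a fin_num.
    by apply: (fin_int (fun w => qv a (x w)) S mS' (mqx a)) => w /=; rewrite qv_ge0 qv_le1.
  have e1 := hU _ (msf2 a j) (fun w => sf_ge0 _).
  have e2 := hU _ (mqx a) (fun w => qv_ge0 _ _).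
  rewrite hT -e2 HS in e1.
  move: e1 => /(congr1 (fun t => t - \int[P]_(w in S) (qv a (x w))%:E)).
  by rewrite addeC (addeC (\int[P]_(w in S) _)) !addeK.
- move=> F mF tF HF; split.
    by apply: bigcupT_measurable => n; case: (HF n).
  rewrite !ge0_integral_bigcup//.
  + by apply: eq_eseriesr => n _; case: (HF n).
  + by move=> n; case: (HF n).
  + by apply/measurable_EFinP; exact: measurable_funTS (mqx a).
  + by move=> w _; rewrite lee_fin qv_ge0.
  + by move=> n; case: (HF n).
  + by apply/measurable_EFinP; exact: measurable_funTS (msf2 a j).
  + by move=> w _; rewrite lee_fin sf_ge0.
Qed.
Definition Tp := g_sigma_algebraType G.

Lemma mTp (f : Omega -> R) : measurable_fun (setT : set Tp) f ->
  measurable_fun (setT : set Omega) f.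
Proof.
move=> mf _ Y mY; have := mf measurableT Y mY; rewrite !setTI; exact: sub_S.
Qed.

Lemma mx_Tp : measurable_fun (setT : set Tp) x.
Proof.
move=> _ B mB; rewrite setTI; apply: sub_gen_smallest.
exists B, (fun _ _ => setT); split => //; split => //.
by apply/seteqP; split => w /=; [move=> Bw; split|case].
Qed.

Lemma my1_Tp a j : measurable_fun (setT : set Tp) (y ord0 a j).
Proof.
move=> _ C mC; rewrite setTI; apply: sub_gen_smallest.
exists setT, (fun b k => if (b == a) && (k == j) then C else setT); split => //.
split; first by move=> b k; case: ifP.
apply/seteqP; split => w /=.
  move=> Cw; split => // b k; case: ifP => // /andP[/eqP -> /eqP ->]; exact: Cw.
by move=> [_ /(_ a j)]; rewrite !eqxx.
Qed.

Definition uu a w := That SA SK Wk1 (fun j => y1 a j w).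
Definition tt a w := That SA SK Wk1 (fun j => y2 a j w).

Lemma That_ge0 (ys : 'I_M -> X) : (0 <= That SA SK Wk1 ys)%R.
Proof.
rewrite /That; apply: mulr_ge0; first by rewrite invr_ge0.
by apply: sumr_ge0 => j _; exact: sf_ge0.
Qed.

Lemma That_le1 (ys : 'I_M -> X) : (That SA SK Wk1 ys <= 1)%R.
Proof.
have M0 : (0 < M%:R :> R)%R by rewrite ltr0n.
rewrite /That ler_pdivrMl// mulr1.
apply: (@le_trans _ _ (\sum_(j < M) 1)%R).
  by apply: ler_sum => j _; exact: sf_le1.
by rewrite sumr_const card_ord.
Qed.

Lemma mThat_gen d0 (T' : measurableType d0) (ys : 'I_M -> T' -> X) :
  (forall j, measurable_fun setT (ys j)) ->
  measurable_fun setT (fun w => That SA SK Wk1 (fun j => ys j w)).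
Proof.
move=> mys; rewrite /That.
apply: measurable_funM; first exact: measurable_cst.
apply: measurable_sum => j.
exact: (measurableT_comp msf (mys j)).
Qed.

Lemma muu_Tp a : measurable_fun (setT : set Tp) (uu a).
Proof. by apply: mThat_gen => j; exact: my1_Tp. Qed.

Lemma mqx_Tp a : measurable_fun (setT : set Tp) (fun w => qv a (x w)).
Proof. exact: (measurableT_comp (mqv a) mx_Tp). Qed.

Lemma mtt a : measurable_fun setT (tt a).
Proof. by apply: mThat_gen => j; exact: my. Qed.

Lemma KL_t a E : <<s G >> E ->
  \int[P]_(w in E) (tt a w)%:E = \int[P]_(w in E) (qv a (x w))%:E.
Proof.
move=> hE; have mE := sub_S E hE.
have hint (f : 'I_M -> Omega -> R) : (forall j, measurable_fun setT (f j)) ->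
    (forall j w, 0 <= f j w)%R ->
    \int[P]_(w in E) (M%:R^-1 * \sum_(j < M) f j w)%:E =
    M%:R^-1%:E * \sum_(j < M) \int[P]_(w in E) (f j w)%:E.
  move=> mf f0.
  under eq_integral do rewrite EFinM.
  rewrite ge0_integralZl_EFin//; last 2 first.
  - by move=> w _; rewrite lee_fin; apply: sumr_ge0 => j _.
  - apply/measurable_EFinP; apply: measurable_funTS.
    by apply: measurable_sum => j; exact: mf.
  congr (_ * _); under eq_integral do rewrite -sumEFin.
  rewrite ge0_integral_sum//.
  - by move=> j; apply/measurable_EFinP; exact: measurable_funTS.
  - by move=> j w _; rewrite lee_fin.
transitivity (\int[P]_(w in E) (M%:R^-1 * \sum_(j < M) qv a (x w))%:E); last first.
  apply: eq_integral => w _; congr EFin.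
  rewrite sumr_const card_ord -[(qv a (x w) *+ M)%R]mulr_natl mulrA mulVf ?mul1r//.
  by rewrite pnatr_eq0 -lt0n.
rewrite /tt /That hint; last 2 first.
  - by move=> j; exact: msf2.
  - by move=> j w; exact: sf_ge0.
rewrite hint; last 2 first.
  - by move=> j; exact: mqx.
  - by move=> j w; exact: qv_ge0.
congr (_ * _); apply: eq_bigr => j _; exact: KL_set.
Qed.

Definition mu_ w := (\big[Num.max/0]_a uu a w)%R.
Definition mq_ z := (\big[Num.max/0]_a qv a z)%R.
Definition Mx w := (\big[Num.max/0]_a `|uu a w - tt a w|)%R.

Definition Ap a : set Omega :=
  [set w | (mq_ (x w) <= mu_ w)%R /\ farg (fun b => uu b w) a].
Definition Am a : set Omega :=
  [set w | (mu_ w < mq_ (x w))%R /\ farg (fun b => qv b (x w)) a].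

Definition N1 w := (\sum_a (\1_(Ap a) w * qv a (x w) + \1_(Am a) w * tt a w))%R.
Definition N2 w := (\sum_a (\1_(Ap a) w * tt a w + \1_(Am a) w * qv a (x w)))%R.

Lemma indic1 (A : set Omega) w : A w -> \1_A w = 1%R :> R.
Proof. by move=> Aw; rewrite indicE mem_set. Qed.

Lemma indic0 (A : set Omega) w : ~ A w -> \1_A w = 0%R :> R.
Proof. by move=> Aw; rewrite indicE memNset. Qed.

Lemma pw w : (`|mu_ w - mq_ (x w)| + N1 w <= Mx w + N2 w)%R.
Proof.
have /card_gt0P [i0 _] := hAct.
rewrite /N1 /N2.
case: (leP (mq_ (x w)) (mu_ w)) => h.
- have [a fa] := farg_ex (fun b => uu b w) i0.
  have Hp b : \1_(Ap b) w = (b == a)%:R :> R.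
    case: eqP => [->|ba]; first by apply: indic1.
    by apply: indic0 => -[_ fb]; apply: ba; exact: (farg_uniq fb fa).
  have Hm b : \1_(Am b) w = 0%R :> R.
    by apply: indic0 => -[hh _]; move: h; rewrite leNgt hh.
  rewrite (bigD1 a) //= big1; last first.
    by move=> b /negbTE ba; rewrite Hp Hm ba !mul0r addr0.
  rewrite (bigD1 a) //= big1; last first.
    by move=> b /negbTE ba; rewrite Hp Hm ba !mul0r addr0.
  rewrite Hp Hm eqxx !mul1r !mul0r !addr0.
  have e1 : mu_ w = uu a w.
    by rewrite /mu_ (bigmax_farg _ a) // => b; [exact: That_ge0|case: fa].
  have e2 : (qv a (x w) <= mq_ (x w))%R by exact: le_bigmax_gen.
  have e3 : (`|uu a w - tt a w| <= Mx w)%R by exact: le_bigmax_gen.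
  have e4 := ler_norm (uu a w - tt a w).
  rewrite ger0_norm ?subr_ge0 //.
  lra.
- have [a fa] := farg_ex (fun b => qv b (x w)) i0.
  have Hm b : \1_(Am b) w = (b == a)%:R :> R.
    case: eqP => [->|ba]; first by apply: indic1.
    by apply: indic0 => -[_ fb]; apply: ba; exact: (farg_uniq fb fa).
  have Hp b : \1_(Ap b) w = 0%R :> R.
    by apply: indic0 => -[hh _]; move: h; rewrite ltNge hh.
  rewrite (bigD1 a) //= big1; last first.
    by move=> b /negbTE ba; rewrite Hp Hm ba !mul0r addr0.
  rewrite (bigD1 a) //= big1; last first.
    by move=> b /negbTE ba; rewrite Hp Hm ba !mul0r addr0.
  rewrite Hp Hm eqxx !mul1r !mul0r !add0r !addr0.
  have e1 : mq_ (x w) = qv a (x w).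
    by rewrite /mq_ (bigmax_farg _ a) // => b; [exact: qv_ge0|case: fa].
  have e2 : (uu a w <= mu_ w)%R by exact: le_bigmax_gen.
  have e3 : (`|uu a w - tt a w| <= Mx w)%R by exact: le_bigmax_gen.
  have e4 := ler_norm (tt a w - uu a w).
  rewrite distrC in e4.
  rewrite ltr0_norm ?subr_lt0 //.
  lra.
Qed.

Lemma mle_Tp (f g : Tp -> R) : measurable_fun setT f -> measurable_fun setT g ->
  measurable [set w : Tp | (f w <= g w)%R].
Proof.
move=> mf mg; have := measurable_fun_ler mf mg measurableT (Y := [set true]).
by rewrite setTI; apply.
Qed.

Lemma mlt_Tp (f g : Tp -> R) : measurable_fun setT f -> measurable_fun setT g ->
  measurable [set w : Tp | (f w < g w)%R].
Proof.
move=> mf mg; have := measurable_fun_ltr mf mg measurableT (Y := [set true]).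
by rewrite setTI; apply.
Qed.

Lemma mfarg_Tp (F : Act -> Tp -> R) a : (forall b, measurable_fun setT (F b)) ->
  measurable [set w : Tp | farg (fun b => F b w) a].
Proof.
move=> mF.
have -> : [set w : Tp | farg (fun b => F b w) a] =
    \bigcap_(b in [set: Act]) [set w : Tp | (F b w <= F a w)%R] `&`
    \bigcap_(b in [set b | (enum_rank b < enum_rank a)%N]) [set w : Tp | (F b w < F a w)%R].
  apply/seteqP; split => w /=.
    by move=> [H1 H2]; split => b /= hb; [exact: H1|exact: H2].
  by move=> [H1 H2]; split => [b|b hb]; [exact: (H1 b Logic.I)|exact: (H2 b hb)].
apply: measurableI.
  apply: fin_bigcap_measurable; first exact: finite_finset.
  by move=> b _; apply: mle_Tp.
apply: fin_bigcap_measurable; first exact: finite_finset.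
by move=> b _; apply: mlt_Tp.
Qed.

Lemma mmu_Tp : measurable_fun (setT : set Tp) mu_.
Proof. by apply: mbigmax => a; exact: muu_Tp. Qed.

Lemma mmqx_Tp : measurable_fun (setT : set Tp) (fun w => mq_ (x w)).
Proof. by apply: mbigmax => a; exact: mqx_Tp. Qed.

Lemma Ap_S a : <<s G >> (Ap a).
Proof.
suff H : @measurable _ Tp (Ap a) by exact: H.
have -> : Ap a = [set w : Tp | (mq_ (x w) <= mu_ w)%R] `&`
    [set w : Tp | farg (fun b => uu b w) a] by [].
apply: measurableI; first exact: mle_Tp mmqx_Tp mmu_Tp.
by apply: mfarg_Tp => b; exact: muu_Tp.
Qed.

Lemma Am_S a : <<s G >> (Am a).
Proof.
suff H : @measurable _ Tp (Am a) by exact: H.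
have -> : Am a = [set w : Tp | (mu_ w < mq_ (x w))%R] `&`
    [set w : Tp | farg (fun b => qv b (x w)) a] by [].
apply: measurableI; first exact: mlt_Tp mmu_Tp mmqx_Tp.
by apply: mfarg_Tp => b; exact: mqx_Tp.
Qed.

Lemma int_ind (D : set Omega) (f : Omega -> R) :
  \int[P]_w (\1_D w * f w)%:E = \int[P]_(w in D) (f w)%:E.
Proof. by rewrite [RHS]conv; apply: eq_integral => w _; rewrite EFinM. Qed.

Lemma int_N (D1 D2 : Act -> set Omega) (f g : Act -> Omega -> R) :
  (forall a, measurable (D1 a)) -> (forall a, measurable (D2 a)) ->
  (forall a, measurable_fun setT (f a)) -> (forall a, measurable_fun setT (g a)) ->
  (forall a w, 0 <= f a w)%R -> (forall a w, 0 <= g a w)%R ->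
  \int[P]_w (\sum_a (\1_(D1 a) w * f a w + \1_(D2 a) w * g a w))%:E =
  \sum_a (\int[P]_(w in D1 a) (f a w)%:E + \int[P]_(w in D2 a) (g a w)%:E).
Proof.
move=> mD1 mD2 mf mg f0 g0.
have mt a (D : set Omega) (h : Act -> Omega -> R) : measurable D ->
    measurable_fun setT (h a) -> measurable_fun setT (fun w => \1_D w * h a w)%R.
  by move=> mD mh; apply: measurable_funM => //; exact: measurable_indic.
under eq_integral do rewrite -sumEFin.
rewrite ge0_integral_sum//; last 2 first.
- move=> a; apply/measurable_EFinP; apply: measurable_funD; exact: mt.
- by move=> a w _; rewrite lee_fin addr_ge0// mulr_ge0.
apply: eq_bigr => a _.
under eq_integral do rewrite EFinD.
rewrite ge0_integralD//; last 4 first.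
- by move=> w _; rewrite lee_fin mulr_ge0.
- by apply/measurable_EFinP; exact: mt.
- by move=> w _; rewrite lee_fin mulr_ge0.
- by apply/measurable_EFinP; exact: mt.
by rewrite !int_ind.
Qed.

Lemma mmu : measurable_fun setT mu_.
Proof. exact: mTp mmu_Tp. Qed.

Lemma mmqx : measurable_fun setT (fun w => mq_ (x w)).
Proof. exact: mTp mmqx_Tp. Qed.

Lemma mMx : measurable_fun setT Mx.
Proof.
apply: mbigmax => a; apply: measurableT_comp; first exact: normr_measurable.
apply: measurable_funB; [exact: mTp (muu_Tp a)|exact: mtt].
Qed.

Lemma mN1 : measurable_fun setT N1.
Proof.
apply: measurable_sum => a; apply: measurable_funD; apply: measurable_funM.
- exact: measurable_indic (sub_S _ (Ap_S a)).
- exact: mqx.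
- exact: measurable_indic (sub_S _ (Am_S a)).
- exact: mtt.
Qed.

Lemma mN2 : measurable_fun setT N2.
Proof.
apply: measurable_sum => a; apply: measurable_funD; apply: measurable_funM.
- exact: measurable_indic (sub_S _ (Ap_S a)).
- exact: mtt.
- exact: measurable_indic (sub_S _ (Am_S a)).
- exact: mqx.
Qed.

Lemma tt_ge0 a w : (0 <= tt a w)%R. Proof. exact: That_ge0. Qed.
Lemma tt_le1 a w : (tt a w <= 1)%R. Proof. exact: That_le1. Qed.
Lemma uu_ge0 a w : (0 <= uu a w)%R. Proof. exact: That_ge0. Qed.

Lemma N1_ge0 w : (0 <= N1 w)%R.
Proof. by apply: sumr_ge0 => a _; rewrite addr_ge0// mulr_ge0// ?qv_ge0 ?tt_ge0. Qed.

Lemma N2_ge0 w : (0 <= N2 w)%R.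
Proof. by apply: sumr_ge0 => a _; rewrite addr_ge0// mulr_ge0// ?qv_ge0 ?tt_ge0. Qed.

Lemma intN12 : \int[P]_w (N1 w)%:E = \int[P]_w (N2 w)%:E.
Proof.
have mAp a := sub_S _ (Ap_S a).
have mAm a := sub_S _ (Am_S a).
rewrite /N1 /N2 !int_N//; first last.
all: try (by move=> a; exact: mtt).
all: try (by move=> a; exact: mqx).
all: try (by move=> a w; exact: tt_ge0).
all: try (by move=> a w; exact: qv_ge0).
by apply: eq_bigr => a _; rewrite (KL_t a _ (Ap_S a)) (KL_t a _ (Am_S a)).
Qed.

Lemma finN1 : \int[P]_w (N1 w)%:E \is a fin_num.
Proof.
have mAp a := sub_S _ (Ap_S a).
have mAm a := sub_S _ (Am_S a).
rewrite /N1 int_N//; first last.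
all: try (by move=> a; exact: mtt).
all: try (by move=> a; exact: mqx).
all: try (by move=> a w; exact: tt_ge0).
all: try (by move=> a w; exact: qv_ge0).
apply/sum_fin_numP => a _ _; rewrite fin_numD; apply/andP; split.
  by apply: fin_int => //; [exact: mqx|move=> w /=; rewrite qv_ge0 qv_le1].
by apply: fin_int => //; [exact: mtt|move=> w /=; rewrite tt_ge0 tt_le1].
Qed.

Lemma Mx_ge0 w : (0 <= Mx w)%R.
Proof. by rewrite /Mx; elim/big_rec: _ => // a r _ hr; rewrite le_max hr orbT. Qed.

Lemma key : \int[P]_w (`|mu_ w - mq_ (x w)|)%:E <= \int[P]_w (Mx w)%:E.
Proof.
have h : \int[P]_w (`|mu_ w - mq_ (x w)| + N1 w)%:E <= \int[P]_w (Mx w + N2 w)%:E.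
  apply: ge0_le_integral => //.
  - by move=> w _; rewrite lee_fin addr_ge0// N1_ge0.
  - apply/measurable_EFinP; apply: measurable_funD; last exact: mN1.
    apply: measurableT_comp; first exact: normr_measurable.
    exact: measurable_funB mmu mmqx.
  - apply/measurable_EFinP; apply: measurable_funD; [exact: mMx|exact: mN2].
  - by move=> w _; rewrite lee_fin pw.
move: h; under eq_integral do rewrite EFinD.
under [X in _ <= X]eq_integral do rewrite EFinD.
rewrite ge0_integralD//; last 3 first.
- apply/measurable_EFinP; apply: measurableT_comp; first exact: normr_measurable.
  exact: measurable_funB mmu mmqx.
- by move=> w _; rewrite lee_fin N1_ge0.
- exact/measurable_EFinP/mN1.
rewrite ge0_integralD//; last 4 first.
- by move=> w _; rewrite lee_fin Mx_ge0.
- exact/measurable_EFinP/mMx.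
- by move=> w _; rewrite lee_fin N2_ge0.
- exact/measurable_EFinP/mN2.
by rewrite -intN12 leeD2rE// finN1.
Qed.

Lemma TopE z : Top T SA SK Wk1 z = (mq_ z)%:E.
Proof.
have /card_gt0P [i0 _] := hAct.
rewrite /Top -(bigmaxe_EFin (fun a => qv a z) i0); last by move=> a; exact: qv_ge0.
by apply: eq_bigr => a _; rewrite -qE.
Qed.

Lemma mWkx : measurable_fun setT (fun w => Wk (x w)).
Proof. by case: hWk => mW _; exact: (measurableT_comp mW mx). Qed.

Lemma final :
  norm1 eta SA SK (fun z => (Wk z)%:E - Top T SA SK Wk1 z) <=
  \int[P]_w (`|Wk (x w) - mu_ w|)%:E + \int[P]_w (Mx w)%:E.
Proof.
set D := SA `\` SK.
have mD : measurable D by exact: measurableD.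
have mg : measurable_fun setT (fun z => (`|Wk z - mq_ z|)%:E).
  apply/measurable_EFinP; apply: measurableT_comp; first exact: normr_measurable.
  apply: measurable_funB; first by case: hWk.
  by apply: mbigmax => a; exact: mqv.
have e1 : norm1 eta SA SK (fun z => (Wk z)%:E - Top T SA SK Wk1 z) =
    \int[eta]_z (`|Wk z - mq_ z|)%:E.
  rewrite /norm1 -/D.
  under eq_integral do rewrite TopE -EFinB abse_EFin.
  rewrite [RHS](_ : _ = \int[eta]_(z in D `|` ~` D) (`|Wk z - mq_ z|)%:E); last first.
    by rewrite setUCr.
  rewrite ge0_integral_setU//.
  - rewrite (null_set_integral (measurableC mD)) ?adde0 //.
    exact: measurable_funTS.
  - exact: measurableC.
  - exact: measurable_funTS.
  - by rewrite disj_set2E setICr.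
have e2 : \int[eta]_z (`|Wk z - mq_ z|)%:E =
    \int[P]_w (`|Wk (x w) - mq_ (x w)|)%:E.
  rewrite (eq_measure_integral (pushforward P x)); last first.
    by move=> A mA _; exact: (eta_law A mA).
  by rewrite ge0_integral_pushforward//.
rewrite e1 e2.
apply: (@le_trans _ _ (\int[P]_w ((`|Wk (x w) - mu_ w| + `|mu_ w - mq_ (x w)|)%R)%:E)).
  apply: ge0_le_integral => //.
  - apply/measurable_EFinP; apply: measurableT_comp; first exact: normr_measurable.
    exact: measurable_funB mWkx mmqx.
  - apply/measurable_EFinP; apply: measurable_funD.
    + apply: measurableT_comp; first exact: normr_measurable.
      exact: measurable_funB mWkx mmu.
    + apply: measurableT_comp; first exact: normr_measurable.
      exact: measurable_funB mmu mmqx.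
  - move=> w _; rewrite lee_fin.
    have := ler_normD (Wk (x w) - mu_ w)%R (mu_ w - mq_ (x w))%R.
    by rewrite addrA subrK.
under eq_integral do rewrite EFinD.
rewrite ge0_integralD//.
- by apply: leeD2l; exact: key.
- apply/measurable_EFinP; apply: measurableT_comp; first exact: normr_measurable.
  exact: measurable_funB mWkx mmu.
- apply/measurable_EFinP; apply: measurableT_comp; first exact: normr_measurable.
  exact: measurable_funB mmu mmqx.
Qed.

End main.
Theorem mainTheorem7 (R : realType) (dX : measure_display) (X : measurableType dX)
  (Act : finType) (T : Act -> R.-pker X ~> X) (SA SK : set X)
  (Wk Wk1 : X -> R) (eta : probability X R) (M : nat)
  (dO : measure_display) (Omega : measurableType dO) (P : probability Omega R)
  (x : Omega -> X) (y : 'I_2 -> Act -> 'I_M -> Omega -> X) :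
  (0 < #|Act|)%N ->
  measurable SA -> measurable SK ->
  inB1 Wk -> inB1 Wk1 ->
  eta (~` (SA `\` SK)) = 0%E ->
  (1 <= M)%N ->
  measurable_fun setT x ->
  (forall i a j, measurable_fun setT (y i a j)) ->
  sampling_law P T eta x y ->
  (norm1 eta SA SK (fun z => (Wk z)%:E - Top T SA SK Wk1 z)%E <=
   \int[P]_w (`| Wk (x w) -
        \big[Num.max/0]_(a : Act) That SA SK Wk1 (fun j => y ord0 a j w) |)%:E +
   \int[P]_w (\big[Num.max/0]_(a : Act)
        `| That SA SK Wk1 (fun j => y ord0 a j w) - That SA SK Wk1 (fun j => y (lift ord0 ord0) a j w) |)%:E)%E.
Proof.
move=> hAct mSA mSK hWk hWk1 heta hM mx my hlaw.
by apply: final.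
Qed.
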